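(* Let $U$ be an $N^2\times N^2$ complex matrix, with entries $U_{(i,j),(k,l)}$ indexed by pairs $i,j,k,l\in\{1,\dots,N\}$. Then $U$ is multiunitary if and only if the state $|\psi_U\rangle=\frac1N\sum_{i,j,k,l}U_{(i,j),(k,l)}|i\rangle|j\rangle|k\rangle|l\rangle$ is an AME(4,$N$) state, equivalently if and only if the array $|\psi_{ij}\rangle=\sum_{k,l}U_{(i,j),(k,l)}|k\rangle|l\rangle$ is a pair of orthogonal quantum Latin squares of size $N$. In particular every multiunitary matrix of size $N^2$ defines a pair of OQLS of size $N$, and every pair of OQLS $\{|\psi_{ij}\rangle\}$ defines the multiunitary matrix $U_{(i,j),(k,l)}=\langle k|\langle l|\psi_{ij}\rangle$.
   Context: For an $N^2\times N^2$ matrix $M$ with entries $M_{(i,j),(k,l)}$, its reshuffling is $M^R_{(i,j),(k,l)}=M_{(i,k),(j,l)}$ and its partial transpose is $M^\Gamma_{(i,j),(k,l)}=M_{(i,l),(k,j)}$. $U$ is multiunitary if $U$, $U^R$ and $U^\Gamma$ are all unitary. A pure state in $(\mathbb{C}^N)^{\otimes4}$ is AME(4,$N$) if its reduced density matrix on every pair of the four parties equals $\mathbb{I}_{N^2}/N^2$. An $N\times N$ array $\{|\psi_{ij}\rangle\}$ of vectors in $\mathbb{C}^N\otimes\mathbb{C}^N$ is a pair of orthogonal quantum Latin squares if: (1) it is an orthonormal basis of $\mathbb{C}^N\otimes\mathbb{C}^N$; (2) for each tensor factor $X$ and all $j,k$, $\mathrm{Tr}_X\sum_i|\psi_{ji}\rangle\langle\psi_{ki}|=\delta_{jk}\mathbb{I}_N$;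 (3) for each tensor factor $X$ and all $j,k$, $\mathrm{Tr}_X\sum_i|\psi_{ij}\rangle\langle\psi_{ik}|=\delta_{jk}\mathbb{I}_N$. *)

(* Defs.v *)
(* Complex scalars: an arbitrary numClosedFieldType C
   (e.g. the complex numbers R[i]); conjugation is z^*. *)
From HB Require Import structures.
From mathcomp Require Import all_boot all_order all_algebra.
Set Implicit Arguments. Unset Strict Implicit. Unset Printing Implicit Defensive.
Import Order.TTheory GRing.Theory Num.Theory.
Local Open Scope ring_scope.

(* Index of the basis of C^N (x) C^N : pairs (i,j) with i,j in {0..N-1}. *)
Notation pidx N := ('I_N * 'I_N)%type.

Definition bimx (C : Type) (N : nat) := pidx N -> pidx N -> C.

(* A vector of C^N (x) C^N, with components v(k,l) = <k|<l|v>. *)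
Definition bivec (C : Type) (N : nat) := pidx N -> C.

Section Defs.
Variables (C : numClosedFieldType) (N : nat).

Definition unitary (U : bimx C N) : Prop :=
  (forall a b : pidx N, \sum_(m : pidx N) U a m * (U b m)^* = (a == b)%:R) /\
  (forall a b : pidx N, \sum_(m : pidx N) (U m a)^* * U m b = (a == b)%:R).

Definition reshuffle (M : bimx C N) : bimx C N :=
  fun a b => M (a.1, b.1) (a.2, b.2).

Definition ptranspose (M : bimx C N) : bimx C N :=
  fun a b => M (a.1, b.2) (b.1, a.2).

Definition multiunitary (U : bimx C N) : Prop :=
  [/\ unitary U, unitary (reshuffle U) & unitary (ptranspose U)].

(* Pure states of four parties: amplitudes psi(x) for x : 'I_4 -> 'I_N. *)
Definition state4 := {ffun 'I_4 -> 'I_N} -> C.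

(* Reduced density matrix on the pair of parties {p,q}:
   rho_{(a,b),(a',b')} = sum over basis configurations s,t that agree on the
   two traced-out parties, with s p = a, s q = b, t p = a', t q = b',
   of psi(s) conj(psi(t)). *)
Definition reduced2 (psi : state4) (p q : 'I_4) (a b a' b' : 'I_N) : C :=
  \sum_(s : {ffun 'I_4 -> 'I_N})
   \sum_(t : {ffun 'I_4 -> 'I_N} |
          [&& [forall r : 'I_4, (r != p) && (r != q) ==> (s r == t r)],
              s p == a, s q == b, t p == a' & t q == b'])
     psi s * (psi t)^*.

Definition AME4 (psi : state4) : Prop :=
  forall p q : 'I_4, p != q ->
  forall a b a' b' : 'I_N,
    reduced2 psi p q a b a' b' = ((a == a') && (b == b'))%:R / (N ^ 2)%:R.

Definition psiU (U : bimx C N) : state4 :=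
  fun s => N%:R^-1 * U (s ord0, s (inord 1)) (s (inord 2), s (inord 3)).

Definition inner (v w : bivec C N) : C := \sum_(m : pidx N) (v m)^* * w m.

Definition orthonormal_basis (psi : 'I_N -> 'I_N -> bivec C N) : Prop :=
  (forall i j i' j' : 'I_N,
      inner (psi i j) (psi i' j') = ((i == i') && (j == j'))%:R) /\
  (forall v : bivec C N, exists c : 'I_N -> 'I_N -> C,
      forall m : pidx N, v m = \sum_(i : 'I_N) \sum_(j : 'I_N) c i j * psi i j m).

Definition ptrace1 (M : bimx C N) (b b' : 'I_N) : C :=
  \sum_(a : 'I_N) M (a, b) (a, b').
Definition ptrace2 (M : bimx C N) (a a' : 'I_N) : C :=
  \sum_(b : 'I_N) M (a, b) (a', b).

Definition outer_sum (v w : 'I_N -> bivec C N) : bimx C N :=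
  fun x y => \sum_(i : 'I_N) v i x * (w i y)^*.

Definition ptraces_delta (M : bimx C N) (d : bool) : Prop :=
  (forall x y : 'I_N, ptrace1 M x y = (d && (x == y))%:R) /\
  (forall x y : 'I_N, ptrace2 M x y = (d && (x == y))%:R).

Definition OQLS (psi : 'I_N -> 'I_N -> bivec C N) : Prop :=
  [/\ orthonormal_basis psi,
      (forall j k : 'I_N,
          ptraces_delta (outer_sum (fun i => psi j i) (fun i => psi k i)) (j == k))
    & (forall j k : 'I_N,
          ptraces_delta (outer_sum (fun i => psi i j) (fun i => psi i k)) (j == k))].

Definition arrayU (U : bimx C N) : 'I_N -> 'I_N -> bivec C N :=
  fun i j kl => U (i, j) kl.

Definition matOQLS (psi : 'I_N -> 'I_N -> bivec C N) : bimx C N :=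
  fun ij kl => psi ij.1 ij.2 kl.

End Defs.

(* Main.v *)
Require Import Defs.
From HB Require Import structures.
From mathcomp Require Import all_boot all_order all_algebra.
Set Implicit Arguments. Unset Strict Implicit. Unset Printing Implicit Defensive.
Import Order.TTheory GRing.Theory Num.Theory.
Local Open Scope ring_scope.

Section S.
Variables (C : numClosedFieldType) (N : nat).
Implicit Types (U M : bimx C N).

Definition rowU M := forall x y : pidx N,
  \sum_(m : pidx N) M x m * (M y m)^* = (x == y)%:R.
Definition colU M := forall x y : pidx N,
  \sum_(m : pidx N) M m x * (M m y)^* = (x == y)%:R.

Lemma colU_alt M : colU M <->
  (forall a b : pidx N, \sum_(m : pidx N) (M m a)^* * M m b = (a == b)%:R).
Proof.
split=> h a b.
- by rewrite eq_sym -h; apply: eq_bigr => m _; rewrite mulrC.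
- by rewrite eq_sym -h; apply: eq_bigr => m _; rewrite mulrC.
Qed.

Lemma unitaryE M : unitary M <-> rowU M /\ colU M.
Proof.
rewrite /unitary; split=> [[h1 h2]|[h1 /colU_alt h2]]; by split=> //; apply/colU_alt.
Qed.

Lemma sum_delta_r (T : finType) (F : T -> C) (a : T) :
  \sum_(m : T) F m * (m == a)%:R = F a.
Proof.
rewrite (bigD1 a) //= eqxx mulr1 big1 ?addr0 // => m /negbTE ->.
by rewrite mulr0.
Qed.

Lemma sum_delta_l (T : finType) (F : T -> C) (a : T) :
  \sum_(m : T) (a == m)%:R * F m = F a.
Proof.
rewrite -[RHS](sum_delta_r F a); apply: eq_bigr => m _.
by rewrite mulrC eq_sym.
Qed.

Lemma pairsum (F : pidx N -> C) :
  \sum_(i : 'I_N) \sum_(j : 'I_N) F (i, j) = \sum_(x : pidx N) F x.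
Proof. by rewrite pair_big /=; apply: eq_bigr => -[i j]. Qed.

Lemma onb_iff U : orthonormal_basis (arrayU U) <-> rowU U /\ colU U.
Proof.
have rowE : rowU U <-> (forall i j i' j' : 'I_N,
      inner (arrayU U i j) (arrayU U i' j') = ((i == i') && (j == j'))%:R).
  split=> h.
  - move=> i j i' j'; rewrite /inner /arrayU -xpair_eqE eq_sym -h.
    by apply: eq_bigr => m _; rewrite mulrC.
  - move=> [i j] [i' j']; rewrite xpair_eqE [i == _]eq_sym [j == _]eq_sym -h /inner /arrayU.
    by apply: eq_bigr => m _; rewrite mulrC.
rewrite /orthonormal_basis; split=> -[hr hs].
  move/rowE: hr => hr; split=> //; apply/colU_alt.
  2: move/colU_alt: hs => hs; split; [by apply/rowE|].
  move=> a b.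
  have [c hc] := hs (fun m => (m == a)%:R).
  pose cc (x : pidx N) := c x.1 x.2.
  have hc' m : (m == a)%:R = \sum_(x : pidx N) cc x * U x m.
    rewrite hc -pairsum //.
  have ccE y : cc y = (U y a)^*.
    transitivity (\sum_(m : pidx N) (U y m)^* * (m == a)%:R); last first.
      by rewrite sum_delta_r.
    under eq_bigr => m _ do rewrite hc' big_distrr.
    rewrite exchange_big /=.
    transitivity (\sum_(x : pidx N) cc x * (x == y)%:R); first by rewrite sum_delta_r.
    apply: eq_bigr => x _; rewrite -(hr x y) big_distrr; apply: eq_bigr => m _.
    by rewrite mulrCA mulrC.
  rewrite eq_sym hc'; apply: eq_bigr => x _; by rewrite ccE.
move=> v; exists (fun i j => \sum_(m : pidx N) (U (i, j) m)^* * v m) => m0.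
  rewrite /arrayU (pairsum (fun x => (\sum_(m : pidx N) (U x m)^* * v m) * U x m0)).
  under eq_bigr => x _ do rewrite big_distrl.
  rewrite exchange_big /=.
  transitivity (\sum_(m : pidx N) v m * (m == m0)%:R); first by rewrite sum_delta_r.
  apply: eq_bigr => m _; rewrite -hs big_distrr; apply: eq_bigr => x _.
  rewrite mulrAC mulrC; exact: mulrC.
Qed.


Lemma L2a U (j k b b' : 'I_N) :
  ptrace1 (outer_sum (fun i => arrayU U j i) (fun i => arrayU U k i)) b b' =
  \sum_(m : pidx N) ptranspose U (j, b) m * (ptranspose U (k, b') m)^*.
Proof. by rewrite /ptrace1 /outer_sum /arrayU /ptranspose pair_big. Qed.

Lemma L2b U (j k a a' : 'I_N) :
  ptrace2 (outer_sum (fun i => arrayU U j i) (fun i => arrayU U k i)) a a' =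
  \sum_(m : pidx N) reshuffle U (j, a) m * (reshuffle U (k, a') m)^*.
Proof. by rewrite /ptrace2 /outer_sum /arrayU /reshuffle exchange_big pair_big. Qed.

Lemma L3a U (j k b b' : 'I_N) :
  ptrace1 (outer_sum (fun i => arrayU U i j) (fun i => arrayU U i k)) b b' =
  \sum_(m : pidx N) reshuffle U m (j, b) * (reshuffle U m (k, b'))^*.
Proof. by rewrite /ptrace1 /outer_sum /arrayU /reshuffle exchange_big pair_big. Qed.

Lemma L3b U (j k a a' : 'I_N) :
  ptrace2 (outer_sum (fun i => arrayU U i j) (fun i => arrayU U i k)) a a' =
  \sum_(m : pidx N) ptranspose U m (a, j) * (ptranspose U m (a', k))^*.
Proof. by rewrite /ptrace2 /outer_sum /arrayU /ptranspose exchange_big pair_big. Qed.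

Lemma cond2_iff U :
  (forall j k : 'I_N, ptraces_delta (outer_sum (fun i => arrayU U j i)
      (fun i => arrayU U k i)) (j == k)) <->
  rowU (ptranspose U) /\ rowU (reshuffle U).
Proof.
split.
- move=> h; split=> -[j b] [k b']; rewrite xpair_eqE.
  + by rewrite -L2a; case: (h j k) => ->.
  + by rewrite -L2b; case: (h j k) => _ ->.
- move=> [h1 h2] j k; split=> x y.
  + by rewrite L2a h1 xpair_eqE.
  + by rewrite L2b h2 xpair_eqE.
Qed.

Lemma cond3_iff U :
  (forall j k : 'I_N, ptraces_delta (outer_sum (fun i => arrayU U i j)
      (fun i => arrayU U i k)) (j == k)) <->
  colU (reshuffle U) /\ colU (ptranspose U).
Proof.
split.
- move=> h; split=> -[a j] [a' k]; rewrite xpair_eqE.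
  + by rewrite -L3a; case: (h a a') => ->.
  + by rewrite andbC -L3b; case: (h j k) => _ ->.
- move=> [h1 h2] j k; split=> x y.
  + by rewrite L3a h1 xpair_eqE.
  + by rewrite L3b h2 xpair_eqE andbC.
Qed.

Lemma OQLS_iff U : multiunitary U <-> OQLS (arrayU U).
Proof.
rewrite /multiunitary /OQLS; split.
- case=> /unitaryE[h1 h2] /unitaryE[h3 h4] /unitaryE[h5 h6]; split.
  + by apply/onb_iff.
  + by apply/cond2_iff.
  + by apply/cond3_iff.
- case=> /onb_iff[h1 h2] /cond2_iff[h5 h3] /cond3_iff[h4 h6].
  by split; apply/unitaryE.
Qed.


Definition mk (p q r1 r2 : 'I_4) (a b c d : 'I_N) : {ffun 'I_4 -> 'I_N} :=
  [ffun r => if r == p then a else if r == q then b else if r == r1 then c else d].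
Definition upd (p q : 'I_4) (a b : 'I_N) (s : {ffun 'I_4 -> 'I_N}) :
  {ffun 'I_4 -> 'I_N} := [ffun r => if r == p then a else if r == q then b else s r].

Lemma inner_t (psi : state4 C N) (p q : 'I_4) (a b a' b' : 'I_N) (s : {ffun 'I_4 -> 'I_N}) : p != q ->
  \sum_(t : {ffun 'I_4 -> 'I_N} |
          [&& [forall r : 'I_4, (r != p) && (r != q) ==> (s r == t r)],
              s p == a, s q == b, t p == a' & t q == b'])
     psi s * (psi t)^* =
  if (s p == a) && (s q == b) then psi s * (psi (upd p q a' b' s))^* else 0.
Proof.
move=> pq; case: ifP => [/andP[/eqP sp /eqP sq] | hf].
- rewrite (eq_bigl (fun t => t == upd p q a' b' s)) ?big_pred1_eq // => t.
  rewrite sp sq !eqxx /=.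
  apply/idP/eqP => [/and3P[/forallP H /eqP tp /eqP tq] | ->].
  + apply/ffunP => r; rewrite ffunE.
    case: eqP => [->//|/eqP rp]; case: eqP => [->//|/eqP rq].
    by have := H r; rewrite rp rq /= => /eqP.
  + rewrite !ffunE eqxx [q == p]eq_sym (negbTE pq) eqxx /= !eqxx andbT.
    apply/forallP => r; rewrite ffunE.
    by apply/implyP => /andP[/negbTE -> /negbTE ->].
- rewrite big_pred0 // => t; apply/negbTE.
  by apply: contraFN hf => /and5P[_ -> -> _ _].
Qed.

Lemma sum_fst (F : pidx N * pidx N -> C) (u0 : pidx N) :
  \sum_(y : pidx N * pidx N) (if y.1 == u0 then F y else 0) =
  \sum_(v : pidx N) F (u0, v).
Proof.
transitivity (\sum_(u : pidx N) \sum_(v : pidx N) (if u == u0 then F (u, v) else 0)).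
  by rewrite pair_big /=; apply: eq_bigr => -[u v].
rewrite (bigD1 u0) //= [X in _ + X]big1 ?addr0.
  by apply: eq_bigr => v _; rewrite eqxx.
by move=> u /negbTE hu; apply: big1 => v _; rewrite hu.
Qed.

Lemma red_gen (psi : state4 C N) (p q r1 r2 : 'I_4) (a b a' b' : 'I_N) :
  p != q -> p != r1 -> p != r2 -> q != r1 -> q != r2 -> r1 != r2 ->
  (forall r : 'I_4, [|| r == p, r == q, r == r1 | r == r2]) ->
  reduced2 psi p q a b a' b' =
  \sum_(v : pidx N) psi (mk p q r1 r2 a b v.1 v.2) *
                    (psi (mk p q r1 r2 a' b' v.1 v.2))^*.
Proof.
move=> pq pr1 pr2 qr1 qr2 r12 cov.
have e1 x y c d : mk p q r1 r2 x y c d p = x by rewrite ffunE eqxx.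
have e2 x y c d : mk p q r1 r2 x y c d q = y.
  by rewrite ffunE [q == p]eq_sym (negbTE pq) eqxx.
have e3 x y c d : mk p q r1 r2 x y c d r1 = c.
  by rewrite ffunE [r1 == p]eq_sym (negbTE pr1) [r1 == q]eq_sym (negbTE qr1) eqxx.
have e4 x y c d : mk p q r1 r2 x y c d r2 = d.
  by rewrite ffunE [r2 == p]eq_sym (negbTE pr2) [r2 == q]eq_sym (negbTE qr2)
     [r2 == r1]eq_sym (negbTE r12).
rewrite /reduced2 (eq_bigr _ (fun s _ => inner_t psi a b a' b' s pq)).
rewrite (reindex (fun y : pidx N * pidx N => mk p q r1 r2 y.1.1 y.1.2 y.2.1 y.2.2)) /=.
  rewrite -(sum_fst (fun y => psi (mk p q r1 r2 a b y.2.1 y.2.2) *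
                    (psi (mk p q r1 r2 a' b' y.2.1 y.2.2))^*) (a, b)).
  apply: eq_bigr => -[[x0 x1] [x2 x3]] _ /=.
  rewrite e1 e2 xpair_eqE; case: ifP => // /andP[/eqP -> /eqP ->].
  congr (_ * (psi _)^*); apply/ffunP => r; rewrite !ffunE.
  by case: (r == p); case: (r == q).
apply: onW_bij; exists (fun s : {ffun 'I_4 -> 'I_N} => ((s p, s q), (s r1, s r2))).
  by move=> [[x0 x1] [x2 x3]] /=; rewrite e1 e2 e3 e4.
move=> s; apply/ffunP => r; rewrite ffunE /=.
case: eqP => [->//|/eqP np]; case: eqP => [->//|/eqP nq]; case: eqP => [->//|/eqP n1].
by move: (cov r); rewrite (negbTE np) (negbTE nq) (negbTE n1) /= => /eqP ->.
Qed.


Definition o0 : 'I_4 := Ordinal (isT : (0 < 4)%N).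
Definition o1 : 'I_4 := Ordinal (isT : (1 < 4)%N).
Definition o2 : 'I_4 := Ordinal (isT : (2 < 4)%N).
Definition o3 : 'I_4 := Ordinal (isT : (3 < 4)%N).

Lemma ord4_cases (P : 'I_4 -> Prop) : P o0 -> P o1 -> P o2 -> P o3 -> forall r, P r.
Proof.
move=> h0 h1 h2 h3 [[|[|[|[|n]]]] hn].
- by rewrite (_ : Ordinal hn = o0) //; apply: val_inj.
- by rewrite (_ : Ordinal hn = o1) //; apply: val_inj.
- by rewrite (_ : Ordinal hn = o2) //; apply: val_inj.
- by rewrite (_ : Ordinal hn = o3) //; apply: val_inj.
- by [].
Qed.

Lemma psiU_mk U p q r1 r2 (a b c d : 'I_N) :
  psiU U (mk p q r1 r2 a b c d) =
  N%:R^-1 * U (mk p q r1 r2 a b c d o0, mk p q r1 r2 a b c d o1)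
              (mk p q r1 r2 a b c d o2, mk p q r1 r2 a b c d o3).
Proof.
have e0 : (ord0 : 'I_4) = o0 by apply: val_inj.
have e1 : (inord 1 : 'I_4) = o1 by apply: val_inj; rewrite /= inordK.
have e2 : (inord 2 : 'I_4) = o2 by apply: val_inj; rewrite /= inordK.
have e3 : (inord 3 : 'I_4) = o3 by apply: val_inj; rewrite /= inordK.
rewrite /psiU e0 e1 e2 e3. reflexivity.
Qed.

Lemma psi_fact (X Y : C) :
  N%:R^-1 * X * (N%:R^-1 * Y)^* = (N ^ 2)%:R^-1 * (X * Y^*).
Proof.
by rewrite rmorphM fmorphV rmorph_nat natrX -exprVn expr2 mulrACA.
Qed.

Ltac redtac x1 x2 := rewrite (@red_gen _ _ _ x1 x2);
  [ | by [] | by [] | by [] | by [] | by [] | by [] | by apply: ord4_cases];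
  rewrite big_distrr; apply: eq_bigr => -[v1 v2] _;
  rewrite !psiU_mk !ffunE /= psi_fact; reflexivity.

Section Cases.
Variables (U : bimx C N) (a b a' b' : 'I_N).

Let R := reshuffle U.
Let G := ptranspose U.
Lemma c01 : reduced2 (psiU U) o0 o1 a b a' b' = (N ^ 2)%:R^-1 * \sum_m U (a, b) m * (U (a', b') m)^*.
Proof. redtac o2 o3. Qed.
Lemma c10 : reduced2 (psiU U) o1 o0 a b a' b' = (N ^ 2)%:R^-1 * \sum_m U (b, a) m * (U (b', a') m)^*.
Proof. redtac o2 o3. Qed.
Lemma c02 : reduced2 (psiU U) o0 o2 a b a' b' = (N ^ 2)%:R^-1 * \sum_m R (a, b) m * (R (a', b') m)^*.
Proof. redtac o1 o3. Qed.
Lemma c20 : reduced2 (psiU U) o2 o0 a b a' b' = (N ^ 2)%:R^-1 * \sum_m R (b, a) m * (R (b', a') m)^*.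
Proof. redtac o1 o3. Qed.
Lemma c03 : reduced2 (psiU U) o0 o3 a b a' b' = (N ^ 2)%:R^-1 * \sum_m G (a, b) m * (G (a', b') m)^*.
Proof. redtac o2 o1. Qed.
Lemma c30 : reduced2 (psiU U) o3 o0 a b a' b' = (N ^ 2)%:R^-1 * \sum_m G (b, a) m * (G (b', a') m)^*.
Proof. redtac o2 o1. Qed.
Lemma c12 : reduced2 (psiU U) o1 o2 a b a' b' = (N ^ 2)%:R^-1 * \sum_m G m (b, a) * (G m (b', a'))^*.
Proof. redtac o0 o3. Qed.
Lemma c21 : reduced2 (psiU U) o2 o1 a b a' b' = (N ^ 2)%:R^-1 * \sum_m G m (a, b) * (G m (a', b'))^*.
Proof. redtac o0 o3. Qed.
Lemma c13 : reduced2 (psiU U) o1 o3 a b a' b' = (N ^ 2)%:R^-1 * \sum_m R m (a, b) * (R m (a', b'))^*.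
Proof. redtac o0 o2. Qed.
Lemma c31 : reduced2 (psiU U) o3 o1 a b a' b' = (N ^ 2)%:R^-1 * \sum_m R m (b, a) * (R m (b', a'))^*.
Proof. redtac o0 o2. Qed.
Lemma c23 : reduced2 (psiU U) o2 o3 a b a' b' = (N ^ 2)%:R^-1 * \sum_m U m (a, b) * (U m (a', b'))^*.
Proof. redtac o0 o1. Qed.
Lemma c32 : reduced2 (psiU U) o3 o2 a b a' b' = (N ^ 2)%:R^-1 * \sum_m U m (b, a) * (U m (b', a'))^*.
Proof. redtac o0 o1. Qed.
End Cases.

Lemma canc (S : C) (T : bool) : (0 < N)%N ->
  (N ^ 2)%:R^-1 * S = T%:R / (N ^ 2)%:R -> S = T%:R.
Proof.
move=> N0 h.
have nz : (N ^ 2)%:R != 0 :> C by rewrite pnatr_eq0 expn_eq0 negb_and -lt0n N0.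
by apply: (mulfI (invr_neq0 nz)); rewrite h mulrC.
Qed.

Lemma pos_of (a : 'I_N) : (0 < N)%N.
Proof. exact: (leq_ltn_trans (leq0n a) (ltn_ord a)). Qed.

Lemma AME_iff U : multiunitary U <-> AME4 (psiU U).
Proof.
split.
- case=> /unitaryE[hU1 hU2] /unitaryE[hR1 hR2] /unitaryE[hG1 hG2].
  move=> p q; elim/ord4_cases: p; elim/ord4_cases: q => pq a b a' b';
  first [ by rewrite eqxx in pq
        | rewrite ?c01 ?c10 ?c02 ?c20 ?c03 ?c30 ?c12 ?c21 ?c13 ?c31 ?c23 ?c32;
          rewrite ?hU1 ?hU2 ?hR1 ?hR2 ?hG1 ?hG2 xpair_eqE mulrC;
          first [reflexivity | by rewrite andbC] ].
- move=> h; split; apply/unitaryE; split.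
  + move=> [a b] [a' b']; have := h o0 o1 isT a b a' b'.
    by rewrite c01 => /(canc (pos_of a)) ->; rewrite xpair_eqE.
  + move=> [a b] [a' b']; have := h o2 o3 isT a b a' b'.
    by rewrite c23 => /(canc (pos_of a)) ->; rewrite xpair_eqE.
  + move=> [a b] [a' b']; have := h o0 o2 isT a b a' b'.
    by rewrite c02 => /(canc (pos_of a)) ->; rewrite xpair_eqE.
  + move=> [a b] [a' b']; have := h o1 o3 isT a b a' b'.
    by rewrite c13 => /(canc (pos_of a)) ->; rewrite xpair_eqE.
  + move=> [a b] [a' b']; have := h o0 o3 isT a b a' b'.
    by rewrite c03 => /(canc (pos_of a)) ->; rewrite xpair_eqE.
  + move=> [a b] [a' b']; have := h o2 o1 isT a b a' b'.
    by rewrite c21 => /(canc (pos_of a)) ->; rewrite xpair_eqE.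
Qed.

End S.

Theorem mainTheorem13 (C : numClosedFieldType) (N : nat) :
  (forall U : bimx C N,
      (multiunitary U <-> AME4 (psiU U)) /\
      (multiunitary U <-> OQLS (arrayU U))) /\
  (forall U : bimx C N, multiunitary U -> OQLS (arrayU U)) /\
  (forall psi : 'I_N -> 'I_N -> bivec C N, OQLS psi -> multiunitary (matOQLS psi)).
Proof.
split; [|split].
- by move=> U; split; [apply: AME_iff | apply: OQLS_iff].
- by move=> U /OQLS_iff.
- by move=> psi h; apply/OQLS_iff; exact: h.
Qed.
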